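(* Let $P$ be a locally finite poset, $R$ a commutative unital ring, and $n\ge 3$. Let $\mathbf{x}=(x_1,\mathbf{u})$ and $\mathbf{y}=(\mathbf{v},y_n)$ be elements of $P^n_\le$, where $x_1,y_n\in P$ and $\mathbf{u},\mathbf{v}\in P^{n-1}_\le$. Then in $I^n(P,R)$, $$e_{\mathbf{x}}e_{\mathbf{y}}=\begin{cases}\sum_{\mathbf{z}\in\mathcal{I}(\mathbf{u})} e_{(x_1,\mathbf{z},y_n)}, & \mathbf{u}=\mathbf{v},\\ 0,& \mathbf{u}\ne\mathbf{v}.\end{cases}$$
   Context: For a poset $P$ and $n\ge 2$, $P^n_\le=\{(x_1,\dots,x_n)\in P^n: x_1\le\dots\le x_n\}$. For $\mathbf{x}=(x_1,\dots,x_n)\in P^n_\le$, $\mathcal{I}(\mathbf{x})=[x_1,x_2]\times\dots\times[x_{n-1},x_n]\subseteq P^{n-1}_\le$, where $[a,b]=\{c\in P: a\le c\le b\}$. The $n$-th partial flag incidence algebra $I^n(P,R)$ is the $R$-module of functions $f:P^n_\le\to R$ with multiplication $(fg)(\mathbf{x})=\sum_{\mathbf{y}\in\mathcal{I}(\mathbf{x})}f(x_1,\mathbf{y})g(\mathbf{y},x_n)$. For $\mathbf{x}\in P^n_\le$, $e_{\mathbf{x}}\in I^n(P,R)$ is the function equal to $1$ at $\mathbf{x}$ and $0$ elsewhere. *)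

(* Defs.v *)
From HB Require Import structures.
From mathcomp Require Import all_boot all_order all_algebra.
From mathcomp Require Import boolp classical_sets cardinality fsbigop.
Set Implicit Arguments. Unset Strict Implicit. Unset Printing Implicit Defensive.
Import Order.TTheory GRing.Theory.
Local Open Scope classical_set_scope.
Local Open Scope ring_scope.

Section PFIA.
Context {disp : Order.disp_t} {P : porderType disp} {R : comNzRingType}.

Definition locally_finite : Prop :=
  forall a b : P, finite_set [set c : P | (a <= c)%O /\ (c <= b)%O].

(* Elements of P^n_<= are represented by sequences of length n that are
   (consecutively) sorted for <=. *)
Definition chain (n : nat) (s : seq P) : bool :=
  (size s == n) && sorted (fun a b : P => (a <= b)%O) s.

(* I(x) = [x_1,x_2] x ... x [x_{n-1},x_n] *)
Definition Icube (x : seq P) : set (seq P) :=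
  [set y : seq P | size y = (size x).-1 /\
     all (fun t : P * P => (t.1 <= t.2)%O) (zip x y) /\
     all (fun t : P * P => (t.1 <= t.2)%O) (zip y (behead x))].

(* Elements of I^n(P,R): functions seq P -> R, only their values on P^n_<=
   are relevant. *)
Definition pfmul (f g : seq P -> R) (x : seq P) : R :=
  match x with
  | [::] => 0
  | x1 :: x' => \sum_(y \in Icube x) f (x1 :: y) * g (rcons y (last x1 x'))
  end.

Definition ebasis (x : seq P) : seq P -> R := fun w => if w == x then 1 else 0.

End PFIA.

(* Main.v *)
Require Import Defs.
From HB Require Import structures.
From mathcomp Require Import all_boot all_order all_algebra.
From mathcomp Require Import boolp classical_sets cardinality fsbigop.
Import Order.TTheory GRing.Theory.
Local Open Scope classical_set_scope.
Local Open Scope ring_scope.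

Lemma zip_rconsl (S T : Type) (s : seq S) (t : seq T) x :
  size s = size t -> zip (rcons s x) t = zip s t.
Proof. by move=> e; rewrite -cats1 -[t in LHS]cats0 zip_cat // cats0. Qed.

Lemma key disp (P : porderType disp) (m u : seq P) (x1 yn : P) :
  size u = (size m).+1 -> (x1 <= head x1 u)%O -> (last yn u <= yn)%O ->
  (Icube (x1 :: rcons m yn) u <-> Icube u m).
Proof.
move=> su hx hy.
rewrite /Icube /= size_rcons su /=.
case: u su hx hy => [//|u1 u'] /= [su'] hx hy.
rewrite hx /= zip_rconsl ?su' //.
rewrite (_ : last u1 u' = last yn (u1 :: u')) // in hy.
have sz : size (u1 :: u') = (size m).+1 by rewrite /= su'.
case/lastP: (u1 :: u') hy sz => [//|u0 ul].
rewrite last_rcons size_rcons => hy [sz].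
rewrite zip_rcons // zip_rconsl // all_rcons /= hy /=.
by split; case=> _ [a b]; split.
Qed.
Lemma fsum_in (R : comNzRingType) (T : choiceType) (A : set T) (F : T -> R) a :
  (forall z, A z -> z <> a -> F z = 0) -> A a -> \sum_(z \in A) F z = F a.
Proof.
move=> H Aa; rewrite -(fsbig_widen [set a] A F); first by rewrite fsbig_set1.
  by move=> z ->.
by move=> z [Az /= nz]; apply: H.
Qed.
Lemma fsum_out (R : comNzRingType) (T : choiceType) (A : set T) (F : T -> R) a :
  (forall z, A z -> z <> a -> F z = 0) -> ~ A a -> \sum_(z \in A) F z = 0.
Proof.
move=> H nAa; apply: fsbig1 => z Az; apply: H => // za; apply: nAa; by rewrite -za.
Qed.

Arguments fsum_in {R T A F a}.
Arguments fsum_out {R T A F a}.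

Theorem proposition1p2 (disp : Order.disp_t) (P : porderType disp)
  (R : comNzRingType) (n : nat) (x1 yn : P) (u v : seq P) :
  locally_finite (P := P) -> (3 <= n)%N ->
  chain n (x1 :: u) -> chain n (rcons v yn) ->
  forall w : seq P, chain n w ->
  pfmul (ebasis (R := R) (x1 :: u)) (ebasis (rcons v yn)) w =
    (if u == v then \sum_(z \in Icube u) ebasis (R := R) (x1 :: rcons z yn) w
     else 0).
Proof.
move=> _ n3 cu cv w cw.
case: w cw => [|w1 w'] cw.
  by move: cw; rewrite /chain /= => /andP [/eqP n0]; rewrite -n0 in n3.
case/lastP: w' cw => [|m wn] cw.
  by move: cw; rewrite /chain /= => /andP [/eqP n0]; rewrite -n0 in n3.
rewrite /pfmul last_rcons.
case: eqP => [ev|neq]; last first.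
  apply: fsbig1 => y _; rewrite /ebasis.
  case: eqP => [[_ ey]|]; last by rewrite mul0r.
  case: eqP => [/rcons_inj [] e _|]; last by rewrite mulr0.
  by case: neq; rewrite -ey.
subst v.
move: cu cv cw; rewrite /chain /= size_rcons.
case/andP => /eqP su pu; case/andP => _ pv; case/andP => /eqP sw _.
have szu : size u = (size m).+1.
  by apply: succn_inj; rewrite su -sw size_rcons.
case: (eqVneq w1 x1) => [e1|ne1]; last first.
  rewrite fsbig1; last first.
    move=> y _; rewrite /ebasis ifN ?mul0r //.
    by apply/eqP => -[] e; rewrite e eqxx in ne1.
  rewrite fsbig1 // => z _; rewrite /ebasis ifN //.
  by apply/eqP => -[] e; rewrite e eqxx in ne1.
case: (eqVneq wn yn) => [e2|ne2]; last first.
  rewrite fsbig1; last first.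
    move=> y _; rewrite /ebasis [X in _ * X]ifN ?mulr0 //.
    by apply/eqP => /rcons_inj -[] _ e; rewrite e eqxx in ne2.
  rewrite fsbig1 // => z _; rewrite /ebasis ifN //.
  by apply/eqP => -[] _ /rcons_inj -[] _ e; rewrite e eqxx in ne2.
subst w1 wn.
have hx : (x1 <= head x1 u)%O.
  by case: u pu {szu su pv} => //= u1 u' /andP [].
have hy : (last yn u <= yn)%O.
  case: u pv {szu su pu hx} => //= u1 u'; rewrite rcons_path => /andP [] //.
have K := @key _ _ m u x1 yn szu hx hy.
have Fu : forall y, Icube (x1 :: rcons m yn) y -> y <> u ->
    ebasis (R := R) (x1 :: u) (x1 :: y) * ebasis (rcons u yn) (rcons y yn) = 0.
  by move=> y _ nyu; rewrite /ebasis ifN ?mul0r //; apply/eqP => -[].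
have Fm : forall z, Icube u z -> z <> m ->
    ebasis (R := R) (x1 :: rcons z yn) (x1 :: rcons m yn) = 0.
  by move=> z _ nzm; rewrite /ebasis ifN //; apply/eqP => -[] /rcons_inj -[] /esym.
case: (pselect (Icube u m)) => im.
  by rewrite (fsum_in Fu) ?(fsum_in Fm) ?K // /ebasis !eqxx mulr1.
by rewrite (fsum_out Fu) ?(fsum_out Fm) ?K.
Qed.
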